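(* For all $\lambda\in[0,1]$ and $\Delta_1,\Delta_2,\Delta_3\in[0,\frac12]$, $C_{\mathrm{SKL}}((\mathrm{BSC}_{\Delta_1}\times\mathrm{BSC}_{\Delta_2}\times\mathrm{BSC}_{\Delta_3})\circ B_{4,\lambda})\le\lambda^2\sum_{i=1}^3C_{\mathrm{SKL}}(\mathrm{BSC}_{\Delta_i})$, and the inequality is strict when $0<\lambda<1$ and $\min\{\Delta_1,\Delta_2,\Delta_3\}<\frac12$.
   Context: $\mathrm{BSC}_\Delta:\{\pm\}\to\{\pm\}$ flips the input with probability $\Delta$. $B_{4,\lambda}:\{\pm\}\to\{\pm\}^3$ is the kernel $B_{4,\lambda}(x_1,x_2,x_3|y)=\lambda+\frac18(1-\lambda)$ if $x_1=x_2=x_3=y$ and $\frac18(1-\lambda)$ otherwise. $\times$ is the tensor product of channels. For a binary-input channel $P$, $C_{\mathrm{SKL}}(P)$ is the SKL information ($f$-information with $f(x)=(x-1)\log x$) between $X\sim\mathrm{Unif}(\{\pm\})$ and the output of $P$; in particular $C_{\mathrm{SKL}}(\mathrm{BSC}_\Delta)=\theta\,\mathrm{arctanh}\,\theta$ with $\theta=1-2\Delta$. *)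

(* Defs.v *)
From HB Require Import structures.
From mathcomp Require Import all_boot all_order all_algebra.
From mathcomp Require Import all_classical all_reals all_analysis.
Set Implicit Arguments. Unset Strict Implicit. Unset Printing Implicit Defensive.
Import Order.TTheory GRing.Theory Num.Theory.
Local Open Scope ring_scope.

(* A (finite-output) channel from I to O is a kernel W : I -> O -> R,
   W x y = probability of output y given input x.
   The binary alphabet {+,-} is encoded by bool (true = +, false = -). *)

Definition BSC (R : realType) (D : R) : bool -> bool -> R :=
  fun x y => if x == y then 1 - D else D.

Definition B4 (R : realType) (l : R) : bool -> bool * bool * bool -> R :=
  fun y x => if x == (y, y, y) then l + (1 - l) / 8 else (1 - l) / 8.

Definition tensor3 (R : realType) (I1 I2 I3 O1 O2 O3 : finType)
  (P1 : I1 -> O1 -> R) (P2 : I2 -> O2 -> R) (P3 : I3 -> O3 -> R)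
  : I1 * I2 * I3 -> O1 * O2 * O3 -> R :=
  fun x y => P1 x.1.1 y.1.1 * P2 x.1.2 y.1.2 * P3 x.2 y.2.

Definition chan_comp (R : realType) (I M O : finType)
  (Q : M -> O -> R) (P : I -> M -> R) : I -> O -> R :=
  fun x z => \sum_(m : M) P x m * Q m z.

(* One summand P_X(x) P_Y(y) f(P_XY(x,y) / (P_X(x) P_Y(y))) of the
   f-information, f(t) = (t-1) log t, with P_X uniform on bool:
   P_XY(x,y) = p/2 where p = W x y, and P_X(x) P_Y(y) = q/2 where
   q = P_Y(y) = (W true y + W false y)/2.  It equals (p - q)/2 * ln(p/q),
   with the standard conventions  0 * f(0/0) = 0  (q = 0) and
   f(0) = lim_{t->0+} f(t) = +oo  (p = 0 < q). *)
Definition skl_term (R : realType) (p q : R) : \bar R :=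
  if q == 0 then 0%E
  else if p == 0 then +oo%E
  else (((p - q) / 2) * ln (p / q))%:E.

Definition CSKL (R : realType) (O : finType) (W : bool -> O -> R) : \bar R :=
  (\sum_(x : bool) \sum_(y : O)
      skl_term (W x y) ((W true y + W false y) / 2))%E.

(* Main.v *)
Require Import Defs.
From HB Require Import structures.
From mathcomp Require Import all_boot all_order all_algebra.
From mathcomp Require Import all_classical all_reals all_analysis.
From mathcomp Require Import ring lra.
Import Order.TTheory GRing.Theory Num.Theory.
Local Open Scope ring_scope.

Definition hf (R : realType) (l x : R) :=
  ln (1 - l + l * x) - l * ln x - l * (1 - l) * (x - ln x).

Arguments hf {R}.
Lemma gpos (R : realType) (l x : R) : 0 <= l <= 1 -> 0 < x -> 0 < 1 - l + l * x.
Proof.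
move=> /andP[l0 l1] x0; have := mulr_ge0 l0 (ltW x0); move=> hh.
have [->|lpos] := eqVneq l 1; first by lra.
by lra.
Qed.

Lemma is_derive_ext (R : realType) (f g : R -> R) (x d : R) :
  (forall y, f y = g y) -> is_derive x 1 f d -> is_derive x 1 g d.
Proof. by move=> fg; have -> : f = g by apply/funext. Qed.

Lemma isd (R : realType) (f g : R -> R) (x d d' : R) :
  (forall y, f y = g y) -> d = d' -> is_derive x 1 f d -> is_derive x 1 g d'.
Proof. by move=> fg <-; have -> : f = g by apply/funext. Qed.

Lemma hf_der (R : realType) (l x : R) : 0 <= l <= 1 -> 0 < x -> is_derive x 1 (hf l)
   (l / (1 - l + l * x) - l / x - l * (1 - l) * (1 - x^-1)).
Proof.
move=> hl x0; have gp := gpos _ _ _ hl x0.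
have H := is_deriveD (is_derive_cst (1 - l) x 1) (is_deriveZ l (is_derive_id x (1:R))).
have Hg := @isd R _ (fun y : R => 1 - l + l * y) _ _ l (fun y => erefl) (etrans (add0r _) (mulr1 _)) H.
have Hl1 : is_derive x 1 ((@ln R) \o (fun y : R => 1 - l + l * y)) ((1 - l + l * x)^-1 * l).
  apply: is_derive1_comp => //; exact: is_derive1_ln.
have Hln : is_derive x 1 (@ln R) x^-1 by exact: is_derive1_ln.
have Hid := is_derive_id x (1:R).
have H3 := is_deriveB (is_deriveB Hl1 (is_deriveZ l Hln))
     (is_deriveZ (l * (1 - l)) (is_deriveB Hid Hln)).
apply: (@isd R _ (hf l) _ _ _ (fun y => erefl) _ H3).
rewrite /GRing.scale /=. field.
by rewrite !gt_eqF.
Qed.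

Lemma hf_nonincr (R : realType) (l x y : R) : 0 <= l <= 1 -> 0 < x -> x <= y ->
  hf l y <= hf l x.
Proof.
move=> hl x0 xy.
have y0 : 0 < y by apply: lt_le_trans xy.
have key := fun (z : R) (hz : 0 < z) => hf_der _ _ _ hl hz.
apply: (@ler0_derive1_le_oo R (hf l) 0 (y + 1)).
- move=> z; rewrite in_itv /= => /andP[z0 _]; have := key z z0; by case.
- move=> z; rewrite in_itv /= => /andP[z0 _].
  have kz := key z z0; rewrite derive1E (@derive_val _ _ _ _ _ _ _ kz).
  have gp := gpos _ _ _ hl z0.
  have -> : l / (1 - l + l * z) - l / z - l * (1 - l) * (1 - z^-1) =
     - (l ^+ 2 * (1 - l) * (z - 1) ^+ 2) / (z * (1 - l + l * z)).
    by field; rewrite !gt_eqF.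
  rewrite mulNr oppr_le0 divr_ge0 //; last by rewrite mulr_ge0 // ltW.
  case/andP: hl => l0 l1.
  by rewrite mulr_ge0 // ?sqr_ge0 // mulr_ge0 ?sqr_ge0 // subr_ge0.
- move=> z; rewrite inE /= in_itv /= => /andP[z0 _].
  apply/differentiable_continuous/derivable1_diffP.
  have := key z z0; by case.
- by rewrite in_itv /= y0 /=; lra.
- by rewrite in_itv /= x0 /=; lra.
- done.
Qed.

Lemma keyK (R : realType) (l P M : R) : 0 <= l <= 1 -> 0 < P -> 0 < M ->
  (P - M) * (ln (1 - l + l * P) - ln (1 - l + l * M)) <=
  l ^+ 2 * ((P - M) * (ln P - ln M)) + l * (1 - l) * (P - M) ^+ 2.
Proof.
move=> hl P0 M0.
have H : (P - M) * (hf l P - hf l M) <= 0.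
  have [PM|MP] := leP P M.
    have := hf_nonincr _ _ _ _ hl P0 PM.
    rewrite -subr_ge0 => h; rewrite mulr_le0_ge0 //.
    by rewrite subr_le0.
  have := hf_nonincr _ _ _ _ hl M0 (ltW MP).
  rewrite -subr_le0 => h; rewrite mulr_ge0_le0 //.
  by rewrite subr_ge0 ltW.
rewrite -subr_ge0.
have -> : l ^+ 2 * ((P - M) * (ln P - ln M)) + l * (1 - l) * (P - M) ^+ 2 -
  (P - M) * (ln (1 - l + l * P) - ln (1 - l + l * M)) = - ((P - M) * (hf l P - hf l M)).
  by rewrite /hf; ring.
by rewrite oppr_ge0.
Qed.

Definition af (R : realType) (t : R) := ln (1 + t) - ln (1 - t) - 2 * t - 2 / 3 * t ^+ 3.
Arguments af {R}.

Lemma af_der (R : realType) (t : R) : -1 < t < 1 -> is_derive t 1 af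
  ((1 + t)^-1 - (1 - t)^-1 * (-1) - 2 - 2 / 3 * (3%:R * t ^+ 2)).
Proof.
move=> /andP[t1 t2].
have Hp := is_deriveD (is_derive_cst (1:R) t 1) (is_derive_id t (1:R)).
have Hp' := @isd R _ (fun y : R => 1 + y) _ _ 1 (fun y => erefl) (add0r _) Hp.
have Hm := is_deriveB (is_derive_cst (1:R) t 1) (is_derive_id t (1:R)).
have Hm' := @isd R _ (fun y : R => 1 - y) _ _ (-1) (fun y => erefl) (sub0r _) Hm.
have H1 : is_derive t 1 ((@ln R) \o (fun y : R => 1 + y)) ((1 + t)^-1 * 1).
  apply: is_derive1_comp => //; apply: is_derive1_ln; lra.
have H2 : is_derive t 1 ((@ln R) \o (fun y : R => 1 - y)) ((1 - t)^-1 * (-1)).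
  apply: is_derive1_comp => //; apply: is_derive1_ln; lra.
have Hid := is_derive_id t (1:R).
have H3 := is_deriveB (is_deriveB (is_deriveB H1 H2) (is_deriveZ 2 Hid))
   (is_deriveZ (2/3) (is_deriveX 3 Hid)).
apply: (@isd R _ af _ _ _ _ _ H3).
  by move=> y; rewrite /af /=.
by rewrite /GRing.scale /= !mulr1.
Qed.

Lemma af_ge0 (R : realType) (t : R) : 0 <= t < 1 -> 0 <= af t.
Proof.
move=> /andP[t0 t1].
have key := fun (z : R) (hz : -1 < z < 1) => af_der _ _ hz.
have -> : 0 = af (0:R) by rewrite /af subr0 addr0 ln1 subrr mulr0 expr0n /= mulr0 !subr0.
apply: (@ger0_derive1_le_oo R af (-1) 1).
- move=> z; rewrite in_itv /= => hz; have := key z hz; by case.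
- move=> z; rewrite in_itv /= => hz.
  have kz := key z hz; rewrite derive1E (@derive_val _ _ _ _ _ _ _ kz).
  case/andP: hz => z1 z2.
  have -> : (1 + z)^-1 - (1 - z)^-1 * -1 - 2 - 2 / 3 * (3%:R * z ^+ 2) =
      2 * z ^+ 4 / ((1 + z) * (1 - z)).
    by field; apply/andP; split; rewrite gt_eqF //; lra.
  apply: divr_ge0; first by rewrite mulr_ge0 // exprn_even_ge0.
  by apply: mulr_ge0; lra.
- move=> z; rewrite inE /= in_itv /= => hz.
  apply/differentiable_continuous/derivable1_diffP.
  have := key z hz; by case.
- by rewrite in_itv /=; lra.
- by rewrite in_itv /=; lra.
- done.
Qed.
Lemma sum_pair (V : nmodType) (I J : finType) (F : I * J -> V) :
  \sum_(p : I * J) F p = \sum_(i : I) \sum_(j : J) F (i, j).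
Proof.
rewrite (pair_bigA _ (fun i j => F (i, j))) /=.
by apply: eq_bigr => -[].
Qed.

Lemma sum3 (R : realType) (F : bool * bool * bool -> R) :
  \sum_(m : bool * bool * bool) F m =
  F (true, true, true) + F (true, true, false) + F (true, false, true) + F (true, false, false)
  + F (false, true, true) + F (false, true, false) + F (false, false, true) + F (false, false, false).
Proof.
rewrite sum_pair sum_pair !big_bool /=.
by rewrite !addrA.
Qed.

Lemma sum3e (R : realType) (F : bool * bool * bool -> \bar R) :
  (\sum_(m : bool * bool * bool) F m =
  F (true, true, true) + F (true, true, false) + F (true, false, true) + F (true, false, false)
  + F (false, true, true) + F (false, true, false) + F (false, false, true) + F (false, false, false))%E.
Proof.
rewrite sum_pair sum_pair !big_bool /=.
by rewrite !addeA.
Qed.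

Lemma W_eq (R : realType) (l D1 D2 D3 : R) x z :
  chan_comp (tensor3 (BSC D1) (BSC D2) (BSC D3)) (B4 l) x z =
  (1 - l) / 8 + l * (BSC D1 x z.1.1 * BSC D2 x z.1.2 * BSC D3 x z.2).
Proof.
rewrite /chan_comp sum3 /B4 /tensor3 /=.
case: x; case: z => [[a b] c]; case: a; case: b; case: c; rewrite /BSC /=; ring.
Qed.

Local Open Scope ereal_scope.

Lemma skl_pair (R : realType) (a b : R) : (0 < a)%R -> (0 < b)%R ->
  skl_term a ((a + b) / 2) + skl_term b ((a + b) / 2) =
  (((a - b) / 4) * (ln a - ln b))%:E.
Proof.
move=> a0 b0.
have q0 : (0 < (a + b) / 2)%R by apply: divr_gt0 => //; rewrite addr_gt0.
rewrite /skl_term !gt_eqF //= -EFinD; congr (_%:E).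
rewrite !ln_div // ?posrE ?addr_gt0 //. set u := ln a; set v := ln b; set w := ln (a + b); set k := ln 2. by field.
Qed.

Lemma CSKL_pos (R : realType) (O : finType) (W : bool -> O -> R) :
  (forall x y, 0 < W x y)%R ->
  CSKL W = (\sum_y ((W true y - W false y) / 4 * (ln (W true y) - ln (W false y))))%:E.
Proof.
move=> Wp; rewrite /CSKL big_bool /= -big_split /= -sumEFin.
by apply: eq_bigr => y _; rewrite skl_pair.
Qed.

Lemma skl_ge0 (R : realType) (p q : R) : (0 <= p)%R -> (0 <= q)%R -> 0 <= skl_term p q.
Proof.
move=> p0 q0; rewrite /skl_term.
have [//|qn0] := eqVneq q 0%R.
have [//|pn0] := eqVneq p 0%R.
have qp : (0 < q)%R by rewrite lt_def qn0 q0.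
have pp : (0 < p)%R by rewrite lt_def pn0 p0.
rewrite lee_fin.
have [qlep|pltq] := leP q p.
  apply: mulr_ge0; first by apply: divr_ge0 => //; rewrite subr_ge0.
  by apply: ln_ge0; rewrite ler_pdivlMr // mul1r.
apply: mulr_le0.
  by apply: mulr_le0_ge0; [rewrite subr_le0 ltW|].
by apply: ln_le0; rewrite ler_pdivrMr // mul1r ltW.
Qed.

Lemma CSKL_ge0 (R : realType) (O : finType) (W : bool -> O -> R) :
  (forall x y, 0 <= W x y)%R -> 0 <= CSKL W.
Proof.
move=> Wp; rewrite /CSKL; apply: sume_ge0 => x _; apply: sume_ge0 => y _.
apply: skl_ge0 => //; apply: divr_ge0 => //; apply: addr_ge0; exact: Wp.
Qed.

Local Close Scope ereal_scope.

Lemma ln3 (R : realType) (a1 a2 a3 : R) : 0 < a1 -> 0 < a2 -> 0 < a3 ->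
  ln (8 * (a1 * a2 * a3)) = ln 8 + ln a1 + ln a2 + ln a3.
Proof.
move=> h1 h2 h3.
by rewrite !lnM ?posrE ?mulr_gt0 // !addrA.
Qed.

Lemma term_bound (R : realType) (l a1 a2 a3 b1 b2 b3 : R) : 0 <= l <= 1 ->
  0 < a1 -> 0 < a2 -> 0 < a3 -> 0 < b1 -> 0 < b2 -> 0 < b3 ->
  (((1 - l) / 8 + l * (a1 * a2 * a3)) - ((1 - l) / 8 + l * (b1 * b2 * b3))) / 4 *
    (ln ((1 - l) / 8 + l * (a1 * a2 * a3)) - ln ((1 - l) / 8 + l * (b1 * b2 * b3))) <=
  l / 32 * (l ^+ 2 * ((8 * (a1 * a2 * a3) - 8 * (b1 * b2 * b3)) *
             ((ln a1 - ln b1) + (ln a2 - ln b2) + (ln a3 - ln b3)))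
           + l * (1 - l) * (8 * (a1 * a2 * a3) - 8 * (b1 * b2 * b3)) ^+ 2).
Proof.
move=> hl h1 h2 h3 k1 k2 k3.
set Wt := (1 - l) / 8 + l * (a1 * a2 * a3).
set Wf := (1 - l) / 8 + l * (b1 * b2 * b3).
set P := 8 * (a1 * a2 * a3). set M := 8 * (b1 * b2 * b3).
have P0 : 0 < P by rewrite /P !mulr_gt0.
have M0 : 0 < M by rewrite /M !mulr_gt0.
have gP := gpos _ _ _ hl P0.
have gM := gpos _ _ _ hl M0.
have eWt : Wt = (1 - l + l * P) / 8 by rewrite /Wt /P; field.
have eWf : Wf = (1 - l + l * M) / 8 by rewrite /Wf /M; field.
have eL : ln P - ln M = (ln a1 - ln b1) + (ln a2 - ln b2) + (ln a3 - ln b3).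
  by rewrite /P /M !ln3 //; ring.
rewrite -eL eWt eWf !ln_div ?posrE ?divr_gt0 //.
have K := keyK _ _ _ _ hl P0 M0.
case/andP: hl => l0 l1.
have l32 : 0 <= l / 32 by rewrite divr_ge0.
have := ler_wpM2l l32 K.
set X := ln (1 - l + l * P); set Y := ln (1 - l + l * M).
set Z := ln P - ln M.
move=> H; apply: le_trans H; rewrite le_eqVlt; apply/orP; left; apply/eqP.
rewrite /=; set k8 := ln 8; by field.
Qed.

Definition sg (R : realType) (s : bool) : R := if s then 1 else -1.
Arguments sg {R}.
Definition cc (R : realType) (D : R) := ln (1 - D) - ln D.
Arguments cc {R}.

Lemma BSC_gt0 (R : realType) (D : R) x y : 0 < D <= 1 / 2 -> 0 < BSC D x y.
Proof. move=> /andP[d0 d1]; rewrite /BSC; case: (x == y) => //; lra. Qed.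

Lemma lnBSC (R : realType) (D : R) s :
  ln (BSC D true s) - ln (BSC D false s) = sg s * cc D.
Proof. by case: s; rewrite /BSC /sg /cc /=; ring. Qed.

Definition Gf (R : realType) (a b : R) := (a - b) / 4 * (ln a - ln b).
Arguments Gf {R}.

Definition bnd (R : realType) (l D1 D2 D3 : R) (z : bool * bool * bool) :=
  let P := 8 * (BSC D1 true z.1.1 * BSC D2 true z.1.2 * BSC D3 true z.2) in
  let M := 8 * (BSC D1 false z.1.1 * BSC D2 false z.1.2 * BSC D3 false z.2) in
  l / 32 * (l ^+ 2 * ((P - M) * (sg z.1.1 * cc D1 + sg z.1.2 * cc D2 + sg z.2 * cc D3))
           + l * (1 - l) * (P - M) ^+ 2).
Arguments bnd {R}.

Lemma per_z (R : realType) (l D1 D2 D3 : R) z : 0 <= l <= 1 ->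
  0 < D1 <= 1 / 2 -> 0 < D2 <= 1 / 2 -> 0 < D3 <= 1 / 2 ->
  Gf (chan_comp (tensor3 (BSC D1) (BSC D2) (BSC D3)) (B4 l) true z)
     (chan_comp (tensor3 (BSC D1) (BSC D2) (BSC D3)) (B4 l) false z) <= bnd l D1 D2 D3 z.
Proof.
move=> hl h1 h2 h3.
rewrite /Gf !W_eq /bnd /=.
have := term_bound _ _ _ _ _ _ _ _ hl (BSC_gt0 _ _ true z.1.1 h1) (BSC_gt0 _ _ true z.1.2 h2)
  (BSC_gt0 _ _ true z.2 h3) (BSC_gt0 _ _ false z.1.1 h1) (BSC_gt0 _ _ false z.1.2 h2)
  (BSC_gt0 _ _ false z.2 h3).
by rewrite !lnBSC.
Qed.

Lemma sum_bnd (R : realType) (l D1 D2 D3 : R) :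
  \sum_z bnd l D1 D2 D3 z =
  l ^+ 3 / 2 * ((1 - 2 * D1) * cc D1 + (1 - 2 * D2) * cc D2 + (1 - 2 * D3) * cc D3)
  + l ^+ 2 * (1 - l) * ((1 - 2 * D1) ^+ 2 + (1 - 2 * D2) ^+ 2 + (1 - 2 * D3) ^+ 2
     + (1 - 2 * D1) ^+ 2 * (1 - 2 * D2) ^+ 2 * (1 - 2 * D3) ^+ 2).
Proof.
rewrite sum3 /bnd /BSC /sg /=.
set c1 := cc D1; set c2 := cc D2; set c3 := cc D3.
by field.
Qed.
Lemma poly_le (R : realType) (x1 x2 x3 : R) : 0 <= x1 <= 1 -> 0 <= x2 <= 1 -> 0 <= x3 <= 1 ->
  3 * (x1 * x2 * x3) <= x1 ^+ 2 + x2 ^+ 2 + x3 ^+ 2.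
Proof.
move=> /andP[a1 b1] /andP[a2 b2] /andP[a3 b3].
have h1 : x1 * x2 * x3 <= x1 * x2 by rewrite ler_piMr // mulr_ge0.
have h2 : x1 * x2 * x3 <= x1 * x3 by rewrite -mulrA [x2 * _]mulrC mulrA ler_piMr // mulr_ge0.
have h3 : x1 * x2 * x3 <= x2 * x3 by rewrite -mulrA ler_piMl // mulr_ge0.
have := sqr_ge0 (x1 - x2); have := sqr_ge0 (x1 - x3); have := sqr_ge0 (x2 - x3).
nra.
Qed.
Lemma poly_lt (R : realType) (x1 x2 x3 : R) : 0 <= x1 < 1 -> 0 <= x2 < 1 -> 0 <= x3 < 1 ->
  0 < x1 + x2 + x3 -> 3 * (x1 * x2 * x3) < x1 ^+ 2 + x2 ^+ 2 + x3 ^+ 2.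
Proof.
move=> /andP[a1 b1] /andP[a2 b2] /andP[a3 b3] s.
have [e1|n1] := eqVneq x1 0.
  rewrite e1 !mul0r mulr0 expr0n /= add0r; rewrite e1 add0r in s.
  have : 0 < x2 ^+ 2 + x3 ^+ 2; last by [].
  have [e2|n2] := eqVneq x2 0.
    rewrite e2 add0r in s; rewrite e2 expr0n /= add0r exprn_gt0 //.
  by rewrite ltr_pwDl ?sqr_ge0 // exprn_gt0 // lt_def n2 a2.
have p1 : 0 < x1 by rewrite lt_def n1 a1.
have [e2|n2] := eqVneq x2 0.
  have q1 : 0 < x1 ^+ 2 by rewrite exprn_gt0.
  have := sqr_ge0 x3; rewrite e2; nra.
have p2 : 0 < x2 by rewrite lt_def n2 a2.
have h1 : x1 * x2 * x3 < x1 * x2 by rewrite gtr_pMr // mulr_gt0.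
have h2 : x1 * x2 * x3 <= x1 * x3 by rewrite -mulrA [x2 * _]mulrC mulrA ler_piMr ?mulr_ge0 // ltW.
have h3 : x1 * x2 * x3 <= x2 * x3 by rewrite -mulrA ler_piMl ?mulr_ge0 // ltW.
have := sqr_ge0 (x1 - x2); have := sqr_ge0 (x1 - x3); have := sqr_ge0 (x2 - x3).
nra.
Qed.

Lemma cbound (R : realType) (D : R) : 0 < D <= 1 / 2 ->
  2 * (1 - 2 * D) + 2 / 3 * (1 - 2 * D) ^+ 3 <= cc D.
Proof.
move=> /andP[d0 d1].
have ht : 0 <= 1 - 2 * D < 1 by apply/andP; split; lra.
have := af_ge0 _ _ ht.
rewrite /af /cc.
have -> : 1 + (1 - 2 * D) = 2 * (1 - D) by ring.
have -> : 1 - (1 - 2 * D) = 2 * D by ring.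
rewrite !lnM ?posrE //; lra.
Qed.

Lemma W_gt0 (R : realType) (l D1 D2 D3 : R) x z : 0 <= l <= 1 ->
  0 < D1 <= 1 / 2 -> 0 < D2 <= 1 / 2 -> 0 < D3 <= 1 / 2 ->
  0 < chan_comp (tensor3 (BSC D1) (BSC D2) (BSC D3)) (B4 l) x z.
Proof.
move=> /andP[l0 l1] h1 h2 h3; rewrite W_eq.
have p := mulr_gt0 (mulr_gt0 (BSC_gt0 _ _ x z.1.1 h1) (BSC_gt0 _ _ x z.1.2 h2)) (BSC_gt0 _ _ x z.2 h3).
have [->|ln1] := eqVneq l 1; first by rewrite subrr mul0r add0r mul1r.
have : 0 <= l * (BSC D1 x z.1.1 * BSC D2 x z.1.2 * BSC D3 x z.2) by rewrite mulr_ge0 // ltW.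
have : l < 1 by rewrite lt_neqAle ln1.
lra.
Qed.

Lemma BSC_ge0 (R : realType) (D : R) x y : 0 <= D <= 1 / 2 -> 0 <= BSC D x y.
Proof. move=> /andP[d0 d1]; rewrite /BSC; case: (x == y) => //; lra. Qed.

Lemma W_gt0' (R : realType) (l D1 D2 D3 : R) x z : 0 <= l < 1 ->
  0 <= D1 <= 1 / 2 -> 0 <= D2 <= 1 / 2 -> 0 <= D3 <= 1 / 2 ->
  0 < chan_comp (tensor3 (BSC D1) (BSC D2) (BSC D3)) (B4 l) x z.
Proof.
move=> /andP[l0 l1] h1 h2 h3; rewrite W_eq.
have p := mulr_ge0 (mulr_ge0 (BSC_ge0 _ _ x z.1.1 h1) (BSC_ge0 _ _ x z.1.2 h2)) (BSC_ge0 _ _ x z.2 h3).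
have := mulr_ge0 l0 p.
lra.
Qed.

Lemma real_main (R : realType) (l D1 D2 D3 : R) : 0 <= l <= 1 ->
  0 < D1 <= 1 / 2 -> 0 < D2 <= 1 / 2 -> 0 < D3 <= 1 / 2 ->
  let W := chan_comp (tensor3 (BSC D1) (BSC D2) (BSC D3)) (B4 l) in
  let S := \sum_z Gf (W true z) (W false z) in
  let T := l ^+ 2 * ((1 - 2 * D1) / 2 * cc D1 + (1 - 2 * D2) / 2 * cc D2 + (1 - 2 * D3) / 2 * cc D3) in
  S <= T /\ (0 < l < 1 -> Num.min (Num.min D1 D2) D3 < 1 / 2 -> S < T).
Proof.
move=> hl h1 h2 h3 W S T.
have HS : S <= \sum_z bnd l D1 D2 D3 z.
  by apply: ler_sum => z _; apply: per_z.
rewrite sum_bnd in HS.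
set t1 := 1 - 2 * D1; set t2 := 1 - 2 * D2; set t3 := 1 - 2 * D3.
have c1 := cbound _ _ h1; have c2 := cbound _ _ h2; have c3 := cbound _ _ h3.
rewrite -/t1 in c1; rewrite -/t2 in c2; rewrite -/t3 in c3.
case/andP: h1 => d1 e1; case/andP: h2 => d2 e2; case/andP: h3 => d3 e3.
have t1r : 0 <= t1 < 1 by apply/andP; split; rewrite /t1; lra.
have t2r : 0 <= t2 < 1 by apply/andP; split; rewrite /t2; lra.
have t3r : 0 <= t3 < 1 by apply/andP; split; rewrite /t3; lra.
have q1 : t1 * (2 * t1 + 2 / 3 * t1 ^+ 3) <= t1 * cc D1.
  by rewrite ler_wpM2l //; case/andP: t1r.
have q2 : t2 * (2 * t2 + 2 / 3 * t2 ^+ 3) <= t2 * cc D2.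
  by rewrite ler_wpM2l //; case/andP: t2r.
have q3 : t3 * (2 * t3 + 2 / 3 * t3 ^+ 3) <= t3 * cc D3.
  by rewrite ler_wpM2l //; case/andP: t3r.
set X := t1 * cc D1 + t2 * cc D2 + t3 * cc D3.
set Y := t1 ^+ 2 + t2 ^+ 2 + t3 ^+ 2 + t1 ^+ 2 * t2 ^+ 2 * t3 ^+ 2.
have eT : T = l ^+ 2 / 2 * X by rewrite /T /X /t1 /t2 /t3; field.
have sq : forall t : R, 0 <= t < 1 -> 0 <= t ^+ 2 <= 1.
  move=> t /andP[ta tb]; apply/andP; split; first by rewrite sqr_ge0.
  by rewrite expr_le1 // ltW.
have sqlt : forall t : R, 0 <= t < 1 -> 0 <= t ^+ 2 < 1.
  move=> t /andP[ta tb]; apply/andP; split; first by rewrite sqr_ge0.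
  by rewrite expr_lt1.
have PL := poly_le _ _ _ _ (sq _ t1r) (sq _ t2r) (sq _ t3r).
have XY : 2 * Y + 2 / 3 * (t1 ^+ 4 + t2 ^+ 4 + t3 ^+ 4) - 2 * (t1 ^+ 2 * t2 ^+ 2 * t3 ^+ 2) <= X.
  rewrite /X /Y. 
  have e4 : forall t : R, t * (2 * t + 2 / 3 * t ^+ 3) = 2 * t ^+ 2 + 2 / 3 * t ^+ 4.
    by move=> t; ring.
  rewrite !e4 in q1 q2 q3. lra.
have XY' : 2 * Y <= X.
  have : (t1 ^+ 2) ^+ 2 = t1 ^+ 4 by rewrite -exprM.
  have : (t2 ^+ 2) ^+ 2 = t2 ^+ 4 by rewrite -exprM.
  have : (t3 ^+ 2) ^+ 2 = t3 ^+ 4 by rewrite -exprM.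
  have : (t1 ^+ 2 * t2 ^+ 2 * t3 ^+ 2) = t1 ^+ 2 * t2 ^+ 2 * t3 ^+ 2 by [].
  lra.
case/andP: hl => l0 l1.
have l2 : 0 <= l ^+ 2 by rewrite sqr_ge0.
have l2' : 0 <= l ^+ 2 * (1 - l) by rewrite mulr_ge0 // subr_ge0.
split.
  apply: (le_trans HS); rewrite eT.
  have : l ^+ 2 / 2 * X - (l ^+ 3 / 2 * X + l ^+ 2 * (1 - l) * Y) =
         l ^+ 2 * (1 - l) / 2 * (X - 2 * Y) by field.
  move=> E; rewrite -subr_ge0 E; apply: mulr_ge0; last by lra.
  by rewrite divr_ge0.
move=> /andP[lp lq] hmin.
apply: (le_lt_trans HS); rewrite eT.
have : l ^+ 2 / 2 * X - (l ^+ 3 / 2 * X + l ^+ 2 * (1 - l) * Y) =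
       l ^+ 2 * (1 - l) / 2 * (X - 2 * Y) by field.
move=> E; rewrite -subr_gt0 E; apply: mulr_gt0.
  by rewrite divr_gt0 // mulr_gt0 ?exprn_gt0 // subr_gt0.
have spos : 0 < t1 ^+ 2 + t2 ^+ 2 + t3 ^+ 2.
  move: hmin; rewrite !gt_min; case/orP; first case/orP.
  - move=> h; have : 0 < t1 by rewrite /t1; lra.
    move=> tp; have := exprn_gt0 2 tp; have := sqr_ge0 t2; have := sqr_ge0 t3; lra.
  - move=> h; have : 0 < t2 by rewrite /t2; lra.
    move=> tp; have := exprn_gt0 2 tp; have := sqr_ge0 t1; have := sqr_ge0 t3; lra.
  - move=> h; have : 0 < t3 by rewrite /t3; lra.
    move=> tp; have := exprn_gt0 2 tp; have := sqr_ge0 t2; have := sqr_ge0 t1; lra.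
have PLT := poly_lt _ _ _ _ (sqlt _ t1r) (sqlt _ t2r) (sqlt _ t3r) spos.
have : (t1 ^+ 2) ^+ 2 = t1 ^+ 4 by rewrite -exprM.
have : (t2 ^+ 2) ^+ 2 = t2 ^+ 4 by rewrite -exprM.
have : (t3 ^+ 2) ^+ 2 = t3 ^+ 4 by rewrite -exprM.
lra.
Qed.

Local Open Scope ereal_scope.

Lemma CSKL_BSC (R : realType) (D : R) : (0 < D <= 1 / 2)%R ->
  CSKL (BSC D) = (((1 - 2 * D) / 2 * cc D)%R)%:E.
Proof.
move=> hD; rewrite CSKL_pos; last by move=> x y; apply: BSC_gt0.
rewrite big_bool /BSC /= /cc; congr (_%:E).
by field.
Qed.

Lemma CSKL_BSC0 (R : realType) : CSKL (BSC (0 : R)) = +oo.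
Proof.
rewrite /CSKL !big_bool /= /skl_term /BSC /=.
rewrite subr0 !addr0 !add0r !(negbTE (oner_neq0 _)) eqxx.
have h : ((1:R) / 2 != 0)%R by rewrite mul1r invr_neq0.
rewrite (negbTE h) /=.
rewrite addey //.
Qed.

Lemma RHS_inf (R : realType) (l D1 D2 D3 : R) : (0 < l)%R ->
  (0 <= D1 <= 1 / 2)%R -> (0 <= D2 <= 1 / 2)%R -> (0 <= D3 <= 1 / 2)%R ->
  (D1 = 0 \/ D2 = 0 \/ D3 = 0)%R ->
  (l ^+ 2)%:E * (CSKL (BSC D1) + CSKL (BSC D2) + CSKL (BSC D3)) = +oo.
Proof.
move=> lp h1 h2 h3 hz.
have g1 : 0 <= CSKL (BSC D1) by apply: CSKL_ge0 => x y; apply: BSC_ge0.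
have g2 : 0 <= CSKL (BSC D2) by apply: CSKL_ge0 => x y; apply: BSC_ge0.
have g3 : 0 <= CSKL (BSC D3) by apply: CSKL_ge0 => x y; apply: BSC_ge0.
have nN : forall x : \bar R, 0 <= x -> x != -oo.
  by move=> x; case: x.
have -> : CSKL (BSC D1) + CSKL (BSC D2) + CSKL (BSC D3) = +oo.
  case: hz => [->|[->|->]]; rewrite CSKL_BSC0.
  - by rewrite addye ?nN // addye ?nN.
  - by rewrite addey ?nN // addye ?nN.
  - by rewrite addey // nN // adde_ge0.
by rewrite muleC gt0_mulye // lte_fin exprn_gt0.
Qed.

Local Close Scope ereal_scope.

Theorem mainTheorem11 (R : realType) (l D1 D2 D3 : R) :
  0 <= l <= 1 ->
  0 <= D1 <= 1 / 2 -> 0 <= D2 <= 1 / 2 -> 0 <= D3 <= 1 / 2 ->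
  (CSKL (chan_comp (tensor3 (BSC D1) (BSC D2) (BSC D3)) (B4 l))
     <= (l ^+ 2)%:E * (CSKL (BSC D1) + CSKL (BSC D2) + CSKL (BSC D3)))%E /\
  (0 < l < 1 -> Num.min (Num.min D1 D2) D3 < 1 / 2 ->
   (CSKL (chan_comp (tensor3 (BSC D1) (BSC D2) (BSC D3)) (B4 l))
     < (l ^+ 2)%:E * (CSKL (BSC D1) + CSKL (BSC D2) + CSKL (BSC D3)))%E).
Proof.
move=> hl h1 h2 h3.
have [l0|lnz] := eqVneq l 0%R.
  subst l.
  have -> : CSKL (chan_comp (tensor3 (BSC D1) (BSC D2) (BSC D3)) (B4 0)) = 0.
    rewrite CSKL_pos; last first.
      by move=> x y; apply: W_gt0' => //; rewrite lexx ltr01.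
    by rewrite big1 // => z _; rewrite !W_eq !mul0r subrr !mul0r.
  rewrite expr0n /= mul0e; split => //.
  by move=> /andP[]; rewrite ltxx.
have lp : (0 < l)%R by case/andP: hl => l0 _; rewrite lt_def lnz l0.
have [hpos|hzero] : ((0 < D1) && (0 < D2) && (0 < D3))%R \/ (D1 = 0 \/ D2 = 0 \/ D3 = 0)%R.
  case/andP: h1 => a1 _; case/andP: h2 => a2 _; case/andP: h3 => a3 _.
  have [->|n1] := eqVneq D1 0%R; first by right; left.
  have [->|n2] := eqVneq D2 0%R; first by right; right; left.
  have [->|n3] := eqVneq D3 0%R; first by right; right; right.
  by left; rewrite !lt_def n1 n2 n3 a1 a2 a3.
  case/andP: hpos => /andP[p1 p2] p3.
  have k1 : (0 < D1 <= 1 / 2)%R by case/andP: h1 => _ ->; rewrite p1.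
  have k2 : (0 < D2 <= 1 / 2)%R by case/andP: h2 => _ ->; rewrite p2.
  have k3 : (0 < D3 <= 1 / 2)%R by case/andP: h3 => _ ->; rewrite p3.
  rewrite CSKL_pos; last by move=> x y; apply: W_gt0.
  rewrite !CSKL_BSC // -!EFinD -EFinM lee_fin lte_fin.
  exact: (real_main _ _ _ _ _ hl k1 k2 k3).
rewrite RHS_inf //; split; first exact: leey.
move=> /andP[_ l1] _.
rewrite CSKL_pos; first exact: ltry.
by move=> x y; apply: W_gt0' => //; rewrite (ltW lp) l1.
Qed.
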